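(* Let $\mathcal V$ be a descent category, $k$ a natural number, $T$ a finite simplicial set and $S\hookrightarrow T$ an $m$-expansion. (i) If $X$ is a $k$-groupoid, then $\mathrm{Map}(T,X)\to\mathrm{Map}(S,X)$ is a cover, and an isomorphism if $m>k$. (ii) If $f:X\to Y$ is a fibration of $k$-groupoids, then $\mathrm{Map}(T,X)\to\mathrm{Map}(S\hookrightarrow T,f)$ is a cover, and an isomorphism if $m>k$.
   Context: A descent category is a small category $\mathcal V$ with a subcategory of morphisms called covers such that: $\mathcal V$ has finite limits; pullbacks of covers are covers; if $f$ and $g\circ f$ are covers then $g$ is a cover. A simplicial space is a simplicial object in $\mathcal V$; for a finite simplicial set $T$, $\mathrm{Map}(T,X)$ is the finite limit representing simplicial maps $T\to X$; $\mathrm{Map}(S\hookrightarrow T,f)=\mathrm{Map}(S,X)\times_{\mathrm{Map}(S,Y)}\mathrm{Map}(T,Y)$. $\Lambda^n_i=\bigcup_{j\ne i}\partial_j\Delta^n$. A $k$-groupoid is a simplicial space with $X_n\to\mathrm{Map}(\Lambda^n_i,X)$ a cover for $n>0$, $0\le i\le n$, and an isomorphism for $n>k$. A fibration is a morphism $f$ with $X_n\to\mathrm{Map}(\Lambda^n_i\hookrightarrow\Delta^n,f)$ a cover for $n>0$, $0\le i\le n$. For $m>0$, $S\hookrightarrow T$ is an $m$-expansion if there is a filtration $S=F_{-1}T\subset F_0T\subset\cdots$ with $T=\bigcup_\ell F_\ell T$, a weakly monotone sequence $n_\ell\ge m$, indices $0\le i_\ell\le n_\ell$, and maps making each $F_\ell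 T$ the pushout of $F_{\ell-1}T\leftarrow\Lambda^{n_\ell}_{i_\ell}\hookrightarrow\Delta^{n_\ell}$. *)

(* Defs.v *)
From Stdlib Require List.
From mathcomp Require Import all_boot.

Set Implicit Arguments.
Unset Strict Implicit.
Unset Printing Implicit Defensive.

Record Cat := {
  ob :> Type;
  hom : ob -> ob -> Type;
  idm : forall a, hom a a;
  comp : forall a b c, hom b c -> hom a b -> hom a c;
  compA : forall a b c d (h : hom c d) (g : hom b c) (f : hom a b),
      comp h (comp g f) = comp (comp h g) f;
  comp1l : forall a b (f : hom a b), comp (idm b) f = f;
  comp1r : forall a b (f : hom a b), comp f (idm a) = f
}.

Arguments hom {C} a b : rename.
Arguments idm {C} a : rename.
Arguments comp {C} [a b c] g f : rename.

Definition iso (C : Cat) (a b : C) (f : hom a b) : Prop :=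
  exists g : hom b a, comp g f = idm a /\ comp f g = idm b.

Definition IsTerminal (C : Cat) (t : C) : Prop :=
  forall a : C, exists u : hom a t, forall v : hom a t, v = u.

Definition IsPullback (C : Cat) (a b c : C) (f : hom a c) (g : hom b c)
    (P : C) (p1 : hom P a) (p2 : hom P b) : Prop :=
  comp f p1 = comp g p2 /\
  forall (Q : C) (q1 : hom Q a) (q2 : hom Q b), comp f q1 = comp g q2 ->
    exists u : hom Q P, (comp p1 u = q1 /\ comp p2 u = q2) /\
      forall u' : hom Q P, comp p1 u' = q1 -> comp p2 u' = q2 -> u' = u.
Arguments IsPullback {C a b c} f g P p1 p2.

(* Descent category.  "V has finite limits" is rendered as the standard
   equivalent: V has a terminal object and all pullbacks. *)
Record Descent (C : Cat) := {
  iscover : forall a b : C, hom a b -> Prop;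
  cover_id : forall a : C, iscover (idm a);
  cover_comp : forall (a b c : C) (g : hom b c) (f : hom a b),
      iscover f -> iscover g -> iscover (comp g f);
  has_terminal : exists t : C, IsTerminal t;
  has_pullbacks : forall (a b c : C) (f : hom a c) (g : hom b c),
      exists (P : C) (p1 : hom P a) (p2 : hom P b), IsPullback f g P p1 p2;
  cover_pullback : forall (a b c : C) (f : hom a c) (g : hom b c)
      (P : C) (p1 : hom P a) (p2 : hom P b),
      IsPullback f g P p1 p2 -> iscover g -> iscover p1;
  cover_cancel : forall (a b c : C) (f : hom a b) (g : hom b c),
      iscover f -> iscover (comp g f) -> iscover g
}.

Arguments iscover {C} V [a b] f : rename.

Definition monob m n (f : {ffun 'I_m.+1 -> 'I_n.+1}) : bool :=
  [forall i : 'I_m.+1, forall j : 'I_m.+1, (i <= j)%N ==> (f i <= f j)%N].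

Definition Dmor (m n : nat) := {f : {ffun 'I_m.+1 -> 'I_n.+1} | monob f}.

Lemma monob_id n : monob [ffun i : 'I_n.+1 => i].
Proof.
by apply/forallP => i; apply/forallP => j; apply/implyP; rewrite !ffunE.
Qed.

Lemma monob_comp m n p (g : Dmor n p) (f : Dmor m n) :
  monob [ffun i => sval g (sval f i)].
Proof.
case: g => g /= Hg; case: f => f /= Hf.
apply/forallP => i; apply/forallP => j; apply/implyP => hij; rewrite !ffunE.
have /implyP := forallP (forallP Hf i) j; move=> /(_ hij) h.
by have /implyP := forallP (forallP Hg (f i)) (f j); apply.
Qed.

Definition Did n : Dmor n n := exist (fun f => monob f) _ (monob_id n).
Definition Dcomp m n p (g : Dmor n p) (f : Dmor m n) : Dmor m p :=
  exist (fun h => monob h) _ (monob_comp g f).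

Lemma sig_eqb (T : Type) (P : T -> bool) (x y : {a | P a}) :
  sval x = sval y -> x = y.
Proof.
case: x => x px; case: y => y py /= e; subst y.
by rewrite (bool_irrelevance px py).
Qed.

Record sObj (C : Cat) := {
  sX :> nat -> C;
  sact : forall m n, Dmor m n -> hom (sX n) (sX m);
  sact_id : forall n, sact (Did n) = idm (sX n);
  sact_comp : forall m n p (f : Dmor m n) (g : Dmor n p),
      sact (Dcomp g f) = comp (sact f) (sact g)
}.
Arguments sact {C} X [m n] f : rename.

Record sHom (C : Cat) (X Y : sObj C) := {
  hm :> forall n, hom (X n) (Y n);
  hnat : forall m n (a : Dmor m n),
      comp (hm m) (sact X a) = comp (sact Y a) (hm n)
}.

Record sSet := {
  lev :> nat -> Type;
  act : forall m n, Dmor m n -> lev n -> lev m;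
  act_id : forall n (x : lev n), act (Did n) x = x;
  act_comp : forall m n p (f : Dmor m n) (g : Dmor n p) (x : lev p),
      act (Dcomp g f) x = act f (act g x)
}.
Arguments act A [m n] f x : rename.

Record sMap (A B : sSet) := {
  smap :> forall n, A n -> B n;
  snat : forall m n (f : Dmor m n) (x : A n), smap (act A f x) = act B f (smap x)
}.

(* sub-simplicial sets, given by (boolean) predicates sclosed under the action *)
Definition sclosed (A : sSet) (P : forall n, A n -> bool) : Prop :=
  forall m n (f : Dmor m n) (x : A n), P n x -> P m (act A f x).

Section Sub.
Variables (A : sSet) (P : forall n, A n -> bool) (cl : sclosed P).

Definition sub_act m n (f : Dmor m n) (x : {y : A n | P y}) : {y : A m | P y} :=
  exist _ (act A f (sval x)) (cl f (svalP x)).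

Lemma sub_act_id n (x : {y : A n | P y}) : sub_act (Did n) x = x.
Proof. by apply: sig_eqb; rewrite /= act_id. Qed.

Lemma sub_act_comp m n p (f : Dmor m n) (g : Dmor n p) (x : {y : A p | P y}) :
  sub_act (Dcomp g f) x = sub_act f (sub_act g x).
Proof. by apply: sig_eqb; rewrite /= act_comp. Qed.

Definition sub : sSet := Build_sSet sub_act_id sub_act_comp.

Definition incl : sMap sub A := @Build_sMap sub A (fun n x => sval x)
  (fun m n f x => erefl).
End Sub.

Definition subincl (A : sSet) (P Q : forall n, A n -> bool)
  (clP : sclosed P) (clQ : sclosed Q) (h : forall n x, P n x -> Q n x) :
  sMap (sub clP) (sub clQ).
Proof.
refine (@Build_sMap (sub clP) (sub clQ)
          (fun n x => exist _ (sval x) (h n _ (svalP x))) _).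
by move=> m n f x; apply: sig_eqb.
Defined.

Lemma Delta_act_id n m (x : Dmor m n) : Dcomp x (Did m) = x.
Proof. by apply: sig_eqb; apply/ffunP => i; rewrite /= !ffunE. Qed.

Lemma Delta_act_comp n m p q (f : Dmor m p) (g : Dmor p q) (x : Dmor q n) :
  Dcomp x (Dcomp g f) = Dcomp (Dcomp x g) f.
Proof. by apply: sig_eqb; apply/ffunP => i; rewrite /= !ffunE. Qed.

Definition Delta (n : nat) : sSet :=
  @Build_sSet (fun m => Dmor m n) (fun m p f x => Dcomp x f)
    (@Delta_act_id n) (@Delta_act_comp n).

(* the horn Lambda^n_i = union over j <> i of the faces d_j Delta^n, where
   d_j Delta^n consists of the simplices not hitting the vertex j *)
Definition hornb n (i : 'I_n.+1) m (x : Dmor m n) : bool :=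
  [exists j : 'I_n.+1, (j != i) && [forall k : 'I_m.+1, sval x k != j]].

Arguments hornb [n] i m x.

Lemma horn_closed n (i : 'I_n.+1) : sclosed (A := Delta n) (hornb i).
Proof.
move=> m p f x /existsP [j /andP [ji /forallP hj]].
apply/existsP; exists j; rewrite ji /=; apply/forallP => k.
by rewrite /= ffunE; apply: hj.
Qed.

Arguments horn_closed [n] i.
Definition Horn n (i : 'I_n.+1) : sSet := sub (horn_closed i).

Definition IsPushout (A B C D : sSet) (a : sMap A B) (b : sMap A C)
    (c : sMap B D) (d : sMap C D) : Prop :=
  (forall n (x : A n), c n (a n x) = d n (b n x)) /\
  forall (Z : sSet) (u : sMap B Z) (v : sMap C Z),
    (forall n (x : A n), u n (a n x) = v n (b n x)) ->
    exists w : sMap D Z,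
      ((forall n (x : B n), w n (c n x) = u n x) /\
       (forall n (x : C n), w n (d n x) = v n x)) /\
      forall w' : sMap D Z,
        (forall n (x : B n), w' n (c n x) = u n x) ->
        (forall n (x : C n), w' n (d n x) = v n x) ->
        forall n (x : D n), w' n x = w n x.

Definition surjb m n (f : Dmor m n) : bool :=
  [forall j : 'I_n.+1, [exists i : 'I_m.+1, sval f i == j]].

Definition degenerate (T : sSet) n (x : T n) : Prop :=
  exists k, (k < n)%N /\
    exists (s : Dmor n k) (y : T k), surjb s /\ x = act T s y.

Definition finite_sSet (T : sSet) : Prop :=
  exists l : list {n : nat & T n},
    forall n (x : T n), ~ degenerate x -> List.In (existT _ n x) l.

(* The filtration S = F_{-1} T c F_0 T c ... c F_{L-1} T = T is
   encoded as F 0 = S, ..., F L = T (index shifted by one); step l (l < L)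
   is the pushout of F l <- Lambda^{ns l}_{is l} -> Delta^{ns l}. *)
Definition expansion (T : sSet) (S : forall n, T n -> bool) (m : nat) : Prop :=
  (0 < m)%N /\
  exists (L : nat) (F : nat -> forall n, T n -> bool)
         (Fcl : forall l, sclosed (F l))
         (Fsub : forall l n (x : T n), F l n x -> F l.+1 n x)
         (ns : nat -> nat) (ix : forall l, 'I_(ns l).+1),
    (forall n (x : T n), F 0%N n x = S n x) /\
    (forall n (x : T n), F L n x) /\
    (forall l, (l < L)%N -> (m <= ns l)%N) /\
    (forall l, (l.+1 < L)%N -> (ns l <= ns l.+1)%N) /\
    (forall l, (l < L)%N ->
       exists (alpha : sMap (Horn (ix l)) (sub (Fcl l)))
              (beta : sMap (Delta (ns l)) (sub (Fcl l.+1))),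
         IsPushout (incl (horn_closed (ix l))) alpha beta
                   (subincl (Fcl l) (Fcl l.+1) (Fsub l))).

Arguments expansion : clear implicits.

Section Maps.
Variable C : Cat.

(* a cone: a simplicial map T -> Hom(U, X_.) *)
Definition cone (T : sSet) (X : sObj C) (U : C)
    (e : forall n, T n -> hom U (X n)) : Prop :=
  forall m n (a : Dmor m n) (t : T n), e m (act T a t) = comp (sact X a) (e n t).

Definition IsMap (T : sSet) (X : sObj C) (M : C)
    (e : forall n, T n -> hom M (X n)) : Prop :=
  cone e /\
  forall (U : C) (phi : forall n, T n -> hom U (X n)), cone phi ->
    exists u : hom U M, (forall n t, comp (e n t) u = phi n t) /\
      forall u' : hom U M, (forall n t, comp (e n t) u' = phi n t) -> u' = u.

Arguments IsMap T X M e : clear implicits.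

(* Pr holds of the canonical map A -> Map(S, X), where A carries a cone
   eA over T (typically A = Map(T, X)) and S is a sub-simplicial set of T;
   the map is characterised by its components, for every choice of Map(S,X). *)
Definition abs_comparison (Pr : forall a b : C, hom a b -> Prop)
    (T : sSet) (S : forall n, T n -> bool) (clS : sclosed S) (X : sObj C)
    (A : C) (eA : forall n, T n -> hom A (X n)) : Prop :=
  forall (MS : C) (eS : forall n, sub clS n -> hom MS (X n)),
    IsMap (sub clS) X MS eS ->
    forall r : hom A MS, (forall n s, comp (eS n s) r = eA n (sval s)) ->
    Pr A MS r.

(* Pr holds of the canonical map A -> Map(S c-> T, f)
     := Map(S,X) x_{Map(S,Y)} Map(T,Y),
   for every choice of the objects Map(S,X), Map(S,Y), Map(T,Y) and of the
   pullback. *)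
Definition rel_comparison (Pr : forall a b : C, hom a b -> Prop)
    (T : sSet) (S : forall n, T n -> bool) (clS : sclosed S)
    (X Y : sObj C) (f : sHom X Y)
    (A : C) (eA : forall n, T n -> hom A (X n)) : Prop :=
  forall (MSX : C) (eSX : forall n, sub clS n -> hom MSX (X n))
         (MSY : C) (eSY : forall n, sub clS n -> hom MSY (Y n))
         (MTY : C) (eTY : forall n, T n -> hom MTY (Y n)),
    IsMap (sub clS) X MSX eSX -> IsMap (sub clS) Y MSY eSY -> IsMap T Y MTY eTY ->
    forall (fS : hom MSX MSY) (rY : hom MTY MSY),
      (forall n s, comp (eSY n s) fS = comp (f n) (eSX n s)) ->
      (forall n s, comp (eSY n s) rY = eTY n (sval s)) ->
    forall (P : C) (p1 : hom P MSX) (p2 : hom P MTY),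
      IsPullback fS rY P p1 p2 ->
    forall (rX : hom A MSX) (fT : hom A MTY),
      (forall n s, comp (eSX n s) rX = eA n (sval s)) ->
      (forall n t, comp (eTY n t) fT = comp (f n) (eA n t)) ->
    forall q : hom A P, comp p1 q = rX -> comp p2 q = fT ->
    Pr A P q.

(* X_n viewed as Map(Delta^n, X) via Yoneda *)
Definition yon (X : sObj C) (n : nat) : forall m, Delta n m -> hom (X n) (X m) :=
  fun m t => sact X t.
Arguments yon X n : clear implicits.

Definition kgroupoid (V : Descent C) (k : nat) (X : sObj C) : Prop :=
  forall n (i : 'I_n.+1), (0 < n)%N ->
    abs_comparison (iscover V) (horn_closed i) (yon X n) /\
    ((k < n)%N -> abs_comparison (@iso C) (horn_closed i) (yon X n)).

Definition fibration (V : Descent C) (X Y : sObj C) (f : sHom X Y) : Prop :=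
  forall n (i : 'I_n.+1), (0 < n)%N ->
    rel_comparison (iscover V) (horn_closed i) f (yon X n).

End Maps.
Arguments IsMap {C} T X M e.

(* Main.v *)
Require Import Defs.
From mathcomp Require Import all_boot.
From Stdlib Require Import FunctionalExtensionality ProofIrrelevance.
Import Defs.
Set Implicit Arguments.
Unset Strict Implicit.
Unset Printing Implicit Defensive.

Lemma sMap_eq (A B : sSet) (F G : sMap A B) :
  (forall n x, F n x = G n x) -> F = G.
Proof.
case: F => F HF; case: G => G HG /= e.
have E : F = G.
  apply: functional_extensionality_dep => n; apply: functional_extensionality => x; exact: e.
subst G; f_equal; apply: proof_irrelevance.
Qed.

Definition scomp (A B D : sSet) (G : sMap B D) (F : sMap A B) : sMap A D.
refine (@Build_sMap A D (fun n x => G n (F n x)) _).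
by move=> m n f x; rewrite !snat.
Defined.

Definition sid (A : sSet) : sMap A A := @Build_sMap A A (fun n x => x) (fun _ _ _ _ => erefl).

Section Basics.
Variable C : Cat.

Definition H (U : C) (X : sObj C) : sSet.
refine (@Build_sSet (fun m => hom U (X m)) (fun m n a g => comp (sact X a) g) _ _).
- by move=> n g; rewrite sact_id comp1l.
- by move=> m n p f g x; rewrite sact_comp compA.
Defined.

Definition post (X : sObj C) (K : sSet) (U V : C) (u : hom V U) (e : sMap K (H U X)) :
  sMap K (H V X).
refine (@Build_sMap K (H V X) (fun n x => comp (e n x) u) _).
by move=> m n f x; rewrite snat /= compA.
Defined.

Definition postf (X Y : sObj C) (f : sHom X Y) (K : sSet) (U : C) (e : sMap K (H U X)) :
  sMap K (H U Y).
refine (@Build_sMap K (H U Y) (fun n x => comp (f n) (e n x)) _).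
by move=> m n a x; rewrite snat /= !compA hnat.
Defined.

Definition mkc (K : sSet) (X : sObj C) (U : C) (e : forall n, K n -> hom U (X n))
  (h : cone e) : sMap K (H U X) := @Build_sMap K (H U X) e h.

Lemma cone_sMap (K : sSet) (X : sObj C) (U : C) (e : sMap K (H U X)) : cone (fun n => e n).
Proof. by move=> m n a t; rewrite snat. Qed.

Definition Rep (K : sSet) (X : sObj C) (M : C) (e : sMap K (H M X)) : Prop :=
  (forall U (phi : sMap K (H U X)), exists u : hom U M, post u e = phi) /\
  (forall U (u v : hom U M), post u e = post v e -> u = v).

Lemma IsMap_Rep (K : sSet) (X : sObj C) (M : C) e (h : cone e) :
  IsMap K X M e -> Rep (mkc h).
Proof.
case=> _ U; split.
- move=> V phi; have [u [Hu _]] := U V (fun n => phi n) (cone_sMap phi).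
  by exists u; apply: sMap_eq => n x /=; rewrite Hu.
- move=> V u v E.
  have [w [_ Hw]] := U V (fun n x => comp (e n x) u) (cone_sMap (post u (mkc h))).
  have e1 : u = w by apply: Hw.
  have e2 : v = w.
    apply: Hw => n t.
    have := f_equal (fun F : sMap _ _ => F n t) E; rewrite /= => ->; reflexivity.
  by rewrite e1 e2.
Qed.

Lemma Rep_IsMap (K : sSet) (X : sObj C) (M : C) (e : sMap K (H M X)) :
  Rep e -> IsMap K X M (fun n => e n).
Proof.
case=> Ex Un; split; first exact: cone_sMap.
move=> U phi hphi; have [u Hu] := Ex U (mkc hphi).
exists u; split.
- by move=> n t; have := f_equal (fun F : sMap _ _ => F n t) Hu.
- move=> u' Hu'; apply: Un; rewrite Hu; apply: sMap_eq => n x /=; exact: Hu'.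
Qed.

Lemma post_comp (X : sObj C) (K : sSet) (U V W : C) (u : hom V U) (v : hom W V)
  (e : sMap K (H U X)) : post v (post u e) = post (comp u v) e.
Proof. by apply: sMap_eq => n x /=; rewrite compA. Qed.

Lemma post_id (X : sObj C) (K : sSet) (U : C) (e : sMap K (H U X)) : post (idm U) e = e.
Proof. by apply: sMap_eq => n x /=; rewrite comp1r. Qed.

Lemma post_scomp (X : sObj C) (K K' : sSet) (U V : C) (u : hom V U)
  (e : sMap K (H U X)) (g : sMap K' K) : post u (scomp e g) = scomp (post u e) g.
Proof. by apply: sMap_eq. Qed.

Lemma postf_post (X Y : sObj C) (f : sHom X Y) (K : sSet) (U V : C) (u : hom V U)
  (e : sMap K (H U X)) : postf f (post u e) = post u (postf f e).
Proof. by apply: sMap_eq => n x /=; rewrite compA. Qed.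

Lemma postf_scomp (X Y : sObj C) (f : sHom X Y) (K K' : sSet) (U : C)
  (e : sMap K (H U X)) (g : sMap K' K) : postf f (scomp e g) = scomp (postf f e) g.
Proof. by apply: sMap_eq. Qed.

Lemma iso_pullback (a b c : C) (f : hom a c) (g : hom b c) P p1 p2 :
  IsPullback f g P p1 p2 -> iso g -> iso p1.
Proof.
case=> sq U [g' [g'g gg']].
have E : comp f (idm a) = comp g (comp g' f) by rewrite compA gg' comp1l comp1r.
have [u [[u1 u2] _]] := U a (idm a) (comp g' f) E.
exists u; split => //.
have [w [_ Hw]] := U P p1 p2 sq.
rewrite (Hw (idm P)) ?comp1r // (Hw (comp u p1)) ?compA ?u1 ?comp1l //.
by rewrite u2 -compA sq compA g'g comp1l.
Qed.

Lemma iso_comp (a b c : C) (f : hom a b) (g : hom b c) : iso f -> iso g -> iso (comp g f).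
Proof.
move=> [f' [f1 f2]] [g' [g1 g2]]; exists (comp f' g'); split.
- by rewrite -compA (compA g') g1 comp1l.
- by rewrite -compA (compA f) f2 comp1l.
Qed.

Lemma iso_id (a : C) : iso (idm a).
Proof. by exists (idm a); rewrite comp1l. Qed.

Lemma iso_inv (a b : C) (f : hom a b) (g : hom b a) : comp g f = idm a -> comp f g = idm b -> iso g.
Proof. by move=> h1 h2; exists f. Qed.

Lemma iso_cover (V : Descent C) (a b : C) (f : hom a b) : iso f -> iscover V f.
Proof.
move=> [f' [h1 h2]].
have PB : IsPullback (idm b) (idm b) a f f.
  split => // Q q1 q2; rewrite !comp1l => e; subst q2.
  exists (comp f' q1); split; first by rewrite compA h2 comp1l.
  by move=> u' e _; rewrite -e compA h1 comp1l.
exact: cover_pullback PB (cover_id V b).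
Qed.

End Basics.
Section Part2.
Variable C : Cat.

Lemma pb_uniq (a b c : C) (f : hom a c) (g : hom b c) P p1 p2 (Q : C) (u v : hom Q P) :
  IsPullback f g P p1 p2 -> comp p1 u = comp p1 v -> comp p2 u = comp p2 v -> u = v.
Proof.
case=> sq U e1 e2.
have E : comp f (comp p1 v) = comp g (comp p2 v) by rewrite !compA sq.
have [w [_ Hw]] := U Q (comp p1 v) (comp p2 v) E.
by rewrite (Hw u e1 e2) (Hw v erefl erefl).
Qed.

Lemma pushout_glue (A B Cc D : sSet) (a : sMap A B) (b : sMap A Cc) (c : sMap B D)
  (d : sMap Cc D) : IsPushout a b c d ->
  forall Z (u : sMap B Z) (v : sMap Cc Z), (forall n x, u n (a n x) = v n (b n x)) ->
  exists w : sMap D Z, scomp w c = u /\ scomp w d = v.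
Proof.
case=> _ U Z u v E; have [w [[w1 w2] _]] := U Z u v E.
by exists w; split; apply: sMap_eq.
Qed.

Lemma pushout_uniq (A B Cc D : sSet) (a : sMap A B) (b : sMap A Cc) (c : sMap B D)
  (d : sMap Cc D) : IsPushout a b c d ->
  forall Z (w1 w2 : sMap D Z), (forall n x, w1 n (c n x) = w2 n (c n x)) ->
    (forall n x, w1 n (d n x) = w2 n (d n x)) -> w1 = w2.
Proof.
case=> sq U Z w1 w2 e1 e2.
have E : forall n x, scomp w1 c n (a n x) = scomp w1 d n (b n x) by move=> n x /=; rewrite sq.
have [w [_ Hw]] := U Z _ _ E.
apply: sMap_eq => n x; rewrite (Hw w1) // (Hw w2) // => m y /=; by rewrite ?e1 ?e2.
Qed.

Lemma pushout_map (X : sObj C) (A B Cc D : sSet) (a : sMap A B) (b : sMap A Cc)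
  (c : sMap B D) (d : sMap Cc D) : IsPushout a b c d ->
  forall MA (eA : sMap A (H MA X)) MB (eB : sMap B (H MB X)) MC (eC : sMap Cc (H MC X)),
  Rep eA -> Rep eB -> Rep eC ->
  forall (ra : hom MB MA) (rb : hom MC MA),
  post ra eA = scomp eB a -> post rb eA = scomp eC b ->
  forall P p1 p2, IsPullback ra rb P p1 p2 ->
  exists eD : sMap D (H P X), Rep eD /\ scomp eD c = post p1 eB /\ scomp eD d = post p2 eC.
Proof.
move=> PO MA eA MB eB MC eC RA RB RC ra rb Ea Eb P p1 p2 PB.
have agree : forall n x, post p1 eB n (a n x) = post p2 eC n (b n x).
  move=> n x /=.
  have e1 := f_equal (fun F : sMap _ _ => F n x) Ea.
  have e2 := f_equal (fun F : sMap _ _ => F n x) Eb.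
  simpl in e1, e2; rewrite -e1 -e2 -!compA; congr (comp _ _); by case: PB.
have [w [w1 w2]] := pushout_glue PO agree.
exists w; split => //; split.
- move=> U phi.
  have [u1 Hu1] := RB.1 U (scomp phi c).
  have [u2 Hu2] := RC.1 U (scomp phi d).
  have E : comp ra u1 = comp rb u2.
    apply: RA.2; rewrite -!post_comp Ea Eb !post_scomp Hu1 Hu2.
    apply: sMap_eq => n x /=; by case: PO => ->.
  have [v [[v1 v2] _]] := PB.2 U u1 u2 E.
  exists v; apply: (pushout_uniq PO) => n x.
  + have := f_equal (fun F : sMap _ _ => F n x) (post_scomp v w c).
    rewrite w1 post_comp v1 Hu1 /= => <-; done.
  + have := f_equal (fun F : sMap _ _ => F n x) (post_scomp v w d).
    rewrite w2 post_comp v2 Hu2 /= => <-; done.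
- move=> U u v E.
  have E1 : post u (post p1 eB) = post v (post p1 eB) by rewrite -w1 !post_scomp E.
  have E2 : post u (post p2 eC) = post v (post p2 eC) by rewrite -w2 !post_scomp E.
  rewrite !post_comp in E1 E2.
  apply: (pb_uniq PB); [exact: RB.2 E1 | exact: RC.2 E2].
Qed.

Lemma Dcomp_id_l m n (t : Dmor m n) : Dcomp (Did n) t = t.
Proof. by apply: sig_eqb; apply/ffunP => i; rewrite /= !ffunE. Qed.

Lemma yon_cone (X : sObj C) n : cone (@yon C X n).
Proof. by move=> m p a t; rewrite /yon /= sact_comp. Qed.

Definition yonc (X : sObj C) n : sMap (Delta n) (H (X n) X) := mkc (@yon_cone X n).

Lemma yon_Rep (X : sObj C) n : Rep (yonc X n).
Proof.
split.
- move=> U phi; exists (phi n (Did n)); apply: sMap_eq => m t /=.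
  rewrite /yon; have := snat phi t (Did n); rewrite /= Dcomp_id_l => ->; done.
- move=> U u v E; have := f_equal (fun F : sMap (Delta n) (H U X) => F n (Did n)) E.
  by rewrite /= /yon sact_id !comp1l.
Qed.

Lemma empty_Rep (X : sObj C) (K : sSet) (hK : forall n (x : K n), False) (t : C) :
  IsTerminal t -> exists e : sMap K (H t X), Rep e.
Proof.
move=> Ht.
have cn : cone (X := X) (U := t) (fun n (x : K n) => False_rect _ (hK n x)).
  by move=> m n a x; case: (hK n x).
exists (mkc cn); split.
- move=> U phi; have [u _] := Ht U; exists u; apply: sMap_eq => n x; case: (hK n x).
- move=> U u v _; have [w Hw] := Ht U; by rewrite (Hw u) (Hw v).
Qed.

Lemma iso_Rep (X : sObj C) (K K' : sSet) (phi : sMap K K') (psi : sMap K' K) :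
  (forall n x, psi n (phi n x) = x) -> (forall n x, phi n (psi n x) = x) ->
  forall M (e : sMap K' (H M X)), Rep e -> Rep (scomp e phi).
Proof.
move=> h1 h2 M e [Ex Un]; split.
- move=> U ph; have [u Hu] := Ex U (scomp ph psi); exists u.
  by rewrite post_scomp Hu; apply: sMap_eq => n x /=; rewrite h1.
- move=> U u v E; apply: Un; apply: sMap_eq => n x.
  have := f_equal (fun F : sMap _ _ => F n (psi n x)) E; by rewrite /= h2.
Qed.

End Part2.
Unset Implicit Arguments.
Section Union.
Variables (K : sSet) (P Q R W : forall n, K n -> bool).
Variables (clP : sclosed P) (clQ : sclosed Q) (clR : sclosed R) (clW : sclosed W).
Hypotheses (hRP : forall n x, R n x -> P n x) (hRQ : forall n x, R n x -> Q n x)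
  (hPW : forall n x, P n x -> W n x) (hQW : forall n x, Q n x -> W n x)
  (hR : forall n x, P n x -> Q n x -> R n x) (hW : forall n x, W n x -> P n x || Q n x).

Lemma hQ n x : P n x = false -> W n x -> Q n x.
Proof. by move=> e /hW; rewrite e. Qed.

Definition glue (Z : sSet) (u : sMap (sub clP) Z) (v : sMap (sub clQ) Z) n (x : sub clW n) : Z n :=
  match sumbool_of_bool (P n (sval x)) with
  | left e => u n (exist (fun y => P n y) (sval x) e)
  | right e => v n (exist (fun y => Q n y) (sval x) (hQ n (sval x) e (svalP x)))
  end.

Section G.
Variables (Z : sSet) (u : sMap (sub clP) Z) (v : sMap (sub clQ) Z).
Hypothesis agree : forall n x, u n (subincl clR clP hRP n x) = v n (subincl clR clQ hRQ n x).

Lemma glue_u n (x : sub clW n) (y : sub clP n) : sval y = sval x -> glue Z u v n x = u n y.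
Proof.
move=> e; rewrite /glue; case: (sumbool_of_bool _) => h.
- by congr (u n _); apply: sig_eqb.
- by move: (svalP y); rewrite e h.
Qed.

Lemma glue_v n (x : sub clW n) (y : sub clQ n) : sval y = sval x -> glue Z u v n x = v n y.
Proof.
move=> e; rewrite /glue; case: (sumbool_of_bool _) => h.
- have r : R n (sval x) by apply: hR => //; rewrite -e; exact: (svalP y).
  have := agree n (exist (fun z => R n z) (sval x) r) => E.
  rewrite (_ : exist _ _ h = subincl clR clP hRP n (exist (fun z => R n z) (sval x) r)); last by apply: sig_eqb.
  by rewrite E; congr (v n _); apply: sig_eqb.
- by congr (v n _); apply: sig_eqb.
Qed.

Definition glueM : sMap (sub clW) Z.
refine (@Build_sMap (sub clW) Z (fun n x => glue Z u v n x) _).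
move=> m n f x.
case hx : (Q n (sval x)).
- rewrite (glue_v _ _ ( exist (fun z => Q n z) (sval x) hx)) //.
  rewrite (glue_v _ _ ( act (sub clQ) f (exist (fun z => Q n z) (sval x) hx))) //.
  by rewrite snat.
- have hp : P n (sval x) by move: (hW n (sval x) (svalP x)); rewrite hx orbF.
  rewrite (glue_u _ _ ( exist (fun z => P n z) (sval x) hp)) //.
  rewrite (glue_u _ _ ( act (sub clP) f (exist (fun z => P n z) (sval x) hp))) //.
  by rewrite snat.
Defined.
End G.

Lemma union_pushout :
  IsPushout (subincl clR clP hRP) (subincl clR clQ hRQ) (subincl clP clW hPW) (subincl clQ clW hQW).
Proof.
split; first by move=> n x; apply: sig_eqb.
move=> Z u v agree; exists (glueM Z u v agree); split; first split.
- by move=> n x; rewrite /= (glue_u Z u v n (subincl clP clW hPW n x) x erefl).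
- by move=> n x; rewrite /= (glue_v Z u v agree n (subincl clQ clW hQW n x) x erefl).
- move=> w' h1 h2 n x /=.
  case hx : (Q n (sval x)).
  + rewrite (glue_v Z u v agree n x ( exist (fun z => Q n z) (sval x) hx)) // -h2.
    by congr (w' n _); apply: sig_eqb.
  + have hp : P n (sval x) by move: (hW n (sval x) (svalP x)); rewrite hx orbF.
    rewrite (glue_u Z u v n x ( exist (fun z => P n z) (sval x) hp)) // -h1.
    by congr (w' n _); apply: sig_eqb.
Qed.
End Union.
Set Implicit Arguments.
From mathcomp Require Import zify.
Unset Implicit Arguments.

Definition inb n (A : {set 'I_n.+1}) m (t : Dmor m n) : bool := [forall k, sval t k \in A].
Definition KLb n (L : seq {set 'I_n.+1}) m (t : Dmor m n) : bool := has (fun A => inb n A m t) L.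

Lemma inb_comp n A m p (t : Dmor p n) (f : Dmor m p) : inb n A p t -> inb n A m (Dcomp t f).
Proof. move=> /forallP h; apply/forallP => k; rewrite /= ffunE; exact: h. Qed.

Lemma KL_closed n L : sclosed (A := Delta n) (KLb n L).
Proof. move=> m p f x /hasP [A AL h]; apply/hasP; exists A => //; exact: inb_comp. Qed.

Definition vfun n (j : 'I_n.+2) : {ffun 'I_n.+2 -> 'I_n.+1} :=
  [ffun x : 'I_n.+2 => inord (if (x < j)%N then (x:nat) else (x:nat).-1)].
Definition ufun n (j : 'I_n.+2) : {ffun 'I_n.+1 -> 'I_n.+2} :=
  [ffun x : 'I_n.+1 => inord (if (x < j)%N then (x:nat) else (x:nat).+1)].

Lemma vvalE n j x : nat_of_ord (vfun n j x) = if (x < j)%N then (x:nat) else (x:nat).-1.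
Proof. rewrite ffunE inordK //; have := ltn_ord x; have := ltn_ord j; case: ifP => /= h; lia. Qed.
Lemma uvalE n j x : nat_of_ord (ufun n j x) = if (x < j)%N then (x:nat) else (x:nat).+1.
Proof. rewrite ffunE inordK //; have := ltn_ord x; have := ltn_ord j; case: ifP => /= h; lia. Qed.

Lemma vmono n j : monob (vfun n j).
Proof.
apply/forallP => a; apply/forallP => b; apply/implyP => h; rewrite !vvalE.
by case: ifP; case: ifP => /=; lia.
Qed.
Lemma umono n j : monob (ufun n j).
Proof.
apply/forallP => a; apply/forallP => b; apply/implyP => h; rewrite !uvalE.
by case: ifP; case: ifP => /=; lia.
Qed.

Definition vD n j : Dmor n.+1 n := exist _ (vfun n j) (vmono n j).
Definition uD n j : Dmor n n.+1 := exist _ (ufun n j) (umono n j).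

Lemma uvK n j x : x != j -> ufun n j (vfun n j x) = x.
Proof.
move=> h; apply: val_inj; rewrite /= uvalE vvalE.
move: h => /eqP h; have h' : (x:nat) <> (j:nat) by move=> e; apply: h; apply: val_inj.
case E: (x < j)%N => /=; case: ifP => /= h2; lia.
Qed.
Lemma vuK n j y : vfun n j (ufun n j y) = y.
Proof.
apply: val_inj; rewrite /= vvalE uvalE.
case E: (y < j)%N => /=; case: ifP => /= h2; lia.
Qed.

Lemma Dcomp_val m n p (g : Dmor n p) (f : Dmor m n) i : sval (Dcomp g f) i = sval g (sval f i).
Proof. by rewrite ffunE. Qed.

Lemma KL1 n A m t : KLb n [:: A] m t = inb n A m t.
Proof. by rewrite /KLb /= orbF. Qed.

Section Face.
Variables (n : nat) (j : 'I_n.+2) (A : {set 'I_n.+2}).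
Hypothesis hj : j \notin A.
Definition A' : {set 'I_n.+1} := [set y | ufun n j y \in A].

Lemma faceF_mem m (x : sub (KL_closed n.+1 [:: A]) m) : KLb n [:: A'] m (Dcomp (vD n j) (sval x)).
Proof.
move: (svalP x); rewrite !KL1 => /forallP h; apply/forallP => k.
rewrite /A' inE Dcomp_val /= uvK; first exact: h.
by apply/eqP => e; move: (h k); rewrite e (negbTE hj).
Qed.

Definition faceF : sMap (sub (KL_closed n.+1 [:: A])) (sub (KL_closed n [:: A'])).
refine (@Build_sMap (sub (KL_closed n.+1 [:: A])) (sub (KL_closed n [:: A']))
  (fun m x => exist _ (Dcomp (vD n j) (sval x)) (faceF_mem m x)) _).
by move=> p q f x; apply: sig_eqb; apply: sig_eqb; apply/ffunP => i; rewrite /= !ffunE.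
Defined.

Lemma faceB_mem m (x : sub (KL_closed n [:: A']) m) : KLb n.+1 [:: A] m (Dcomp (uD n j) (sval x)).
Proof.
move: (svalP x); rewrite !KL1 => /forallP h; apply/forallP => k.
by move: (h k); rewrite /A' inE Dcomp_val.
Qed.

Definition faceB : sMap (sub (KL_closed n [:: A'])) (sub (KL_closed n.+1 [:: A])).
refine (@Build_sMap (sub (KL_closed n [:: A'])) (sub (KL_closed n.+1 [:: A]))
  (fun m x => exist _ (Dcomp (uD n j) (sval x)) (faceB_mem m x)) _).
by move=> p q f x; apply: sig_eqb; apply: sig_eqb; apply/ffunP => i; rewrite /= !ffunE.
Defined.

Lemma faceBF m x : faceB m (faceF m x) = x.
Proof.
apply: sig_eqb; apply: sig_eqb; apply/ffunP => k.
change (sval (Dcomp (uD n j) (Dcomp (vD n j) (sval x))) k = sval (sval x) k).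
rewrite !Dcomp_val /= uvK //.
move: (svalP x); rewrite KL1 => /forallP h.
by apply/eqP => e; move: (h k); rewrite e (negbTE hj).
Qed.

Lemma faceFB m x : faceF m (faceB m x) = x.
Proof.
apply: sig_eqb; apply: sig_eqb; apply/ffunP => k.
change (sval (Dcomp (vD n j) (Dcomp (uD n j) (sval x))) k = sval (sval x) k).
by rewrite !Dcomp_val /= vuK.
Qed.
End Face.

Set Implicit Arguments.

Lemma subeq_iso (K : sSet) (P Q : forall n, K n -> bool) (clP : sclosed P) (clQ : sclosed Q)
  (hPQ : forall n x, P n x = Q n x) :
  exists (phi : sMap (sub clP) (sub clQ)) (psi : sMap (sub clQ) (sub clP)),
    (forall n x, psi n (phi n x) = x) /\ (forall n x, phi n (psi n x) = x).
Proof.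
have h1 : forall n x, P n x -> Q n x by move=> n x; rewrite hPQ.
have h2 : forall n x, Q n x -> P n x by move=> n x; rewrite hPQ.
exists (subincl clP clQ h1), (subincl clQ clP h2).
by split => n x; apply: sig_eqb.
Qed.

Lemma fullB_mem n m (t : Dmor m n) : KLb n [:: setT] m t.
Proof. by rewrite KL1; apply/forallP => k; rewrite inE. Qed.

Definition fullB n : sMap (Delta n) (sub (KL_closed n [:: setT])).
refine (@Build_sMap (Delta n) (sub (KL_closed n [:: setT])) (fun m t => exist _ t (fullB_mem t)) _).
by move=> p q f x; apply: sig_eqb.
Defined.

Lemma inbI n (A B : {set 'I_n.+1}) m t : inb n (A :&: B) m t = inb n A m t && inb n B m t.
Proof.
apply/forallP/andP => [h|[/forallP h1 /forallP h2] k]; last by rewrite inE h1 h2.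
by split; apply/forallP => k; move: (h k); rewrite inE => /andP[].
Qed.

Definition hornL n (i : 'I_n.+1) : seq {set 'I_n.+1} := [seq [set~ j] | j <- enum 'I_n.+1 & j != i].

Lemma horn_KL n (i : 'I_n.+1) m (t : Dmor m n) : hornb i m t = KLb n (hornL i) m t.
Proof.
apply/existsP/hasP => [[j /andP [ji /forallP h]]|[B /mapP [j]]].
- exists [set~ j]; first by apply/mapP; exists j => //; rewrite mem_filter ji mem_enum.
  by apply/forallP => k; rewrite !inE; exact: h.
- rewrite mem_filter mem_enum andbT => ji -> /forallP h; exists j; rewrite ji /=.
  by apply/forallP => k; move: (h k); rewrite !inE.
Qed.

Section KLRep.
Variables (C : Cat) (X : sObj C) (t0 : C).
Hypothesis Ht : IsTerminal t0.
Hypothesis HP : forall (a b c : C) (f : hom a c) (g : hom b c),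
      exists (P : C) (p1 : hom P a) (p2 : hom P b), IsPullback f g P p1 p2.

Lemma single_Rep n (A : {set 'I_n.+1}) :
  exists M (e : sMap (sub (KL_closed n [:: A])) (H M X)), Rep e.
Proof.
elim: n A => [|n IH] A.
- case: (boolP (A == setT)) => hA.
  + rewrite (eqP hA); exists (X 0).
    exists (scomp (yonc X 0) (incl (KL_closed 0 [:: setT]))).
    apply: (iso_Rep (psi := fullB 0)) => [m x|m x|]; [by apply: sig_eqb | by [] | exact: yon_Rep].
  + have hK : forall m (x : sub (KL_closed 0 [:: A]) m), False.
      move=> m [x hx]; move: hx; rewrite KL1 => /forallP /(_ ord0) h.
      move: hA => /eqP; apply; apply/setP => y; rewrite inE.
      by rewrite (ord1 y) -(ord1 (sval x ord0)).
    exists t0; exact: empty_Rep.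
- case: (boolP (A == setT)) => hA.
  + rewrite (eqP hA); exists (X n.+1).
    exists (scomp (yonc X n.+1) (incl (KL_closed n.+1 [:: setT]))).
    apply: (iso_Rep (psi := fullB n.+1)) => [m x|m x|]; [by apply: sig_eqb | by [] | exact: yon_Rep].
  + have [j hj] : exists j, j \notin A.
      apply/existsP; move: hA; apply: contraR => /existsPn h; apply/eqP/setP => y.
      by move: (h y); rewrite inE negbK.
    have [M [e Re]] := IH (A' n j A).
    exists M, (scomp e (faceF n j A hj)).
    apply: (@iso_Rep C X _ _ (faceF n j A hj) (faceB n j A)); [exact: faceBF | exact: faceFB | exact: Re].
Qed.


Lemma KL_Rep n L : exists M (e : sMap (sub (KL_closed n L)) (H M X)), Rep e.
Proof.
move: {2}(size L) (leqnn (size L)) => s; elim: s L => [|s IH] [|A L] //= hs.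
- have hK : forall m (x : sub (KL_closed n [::]) m), False by move=> m [x hx].
  exists t0; exact: empty_Rep.
- have hK : forall m (x : sub (KL_closed n [::]) m), False by move=> m [x hx].
  exists t0; exact: empty_Rep.
- case: L hs => [|B L'] hs; first exact: single_Rep.
  set L := B :: L'.
  have hRP : forall m x, KLb n (map (setI A) L) m x -> KLb n [:: A] m x.
    by move=> m x /hasP [B' /mapP [B0 _ ->]]; rewrite KL1 inbI => /andP [].
  have hRQ : forall m x, KLb n (map (setI A) L) m x -> KLb n L m x.
    move=> m x /hasP [B' /mapP [B0 B0L ->]]; rewrite inbI => /andP [_ h].
    by apply/hasP; exists B0.
  have hPW : forall m x, KLb n [:: A] m x -> KLb n (A :: L) m x.
    by move=> m x; rewrite KL1 /KLb /= => ->.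
  have hQW : forall m x, KLb n L m x -> KLb n (A :: L) m x.
    by move=> m x h; apply/orP; right; exact: h.
  have hR : forall m x, KLb n [:: A] m x -> KLb n L m x -> KLb n (map (setI A) L) m x.
    move=> m x; rewrite KL1 => hA /hasP [B0 B0L hB]; apply/hasP; exists (A :&: B0).
    - by apply: (map_f (setI A)).
    - by rewrite inbI hA.
  have hW : forall m x, KLb n (A :: L) m x -> KLb n [:: A] m x || KLb n L m x.
    by move=> m x; rewrite KL1.
  have [MP [eP RP]] := single_Rep A.
  have [MQ [eQ RQ]] := IH L hs.
  have hs' : size (map (setI A) L) <= s by rewrite size_map.
  have [MR [eR RR]] := IH (map (setI A) L) hs'.
  have [ra Era] := RR.1 MP (scomp eP (subincl (KL_closed n (map (setI A) L)) (KL_closed n [:: A]) hRP)).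
  have [rb Erb] := RR.1 MQ (scomp eQ (subincl (KL_closed n (map (setI A) L)) (KL_closed n L) hRQ)).
  have [Pb [p1 [p2 PB]]] := HP ra rb.
  have PO := union_pushout (Delta n) _ _ _ _ (KL_closed n [:: A]) (KL_closed n L) (KL_closed n (map (setI A) L))
    (KL_closed n (A :: L)) hRP hRQ hPW hQW hR hW.
  have [eD [RD _]] := pushout_map PO RR RP RQ Era Erb PB.
  by exists Pb, eD.
Qed.

Lemma Horn_Rep n (i : 'I_n.+1) : exists M (e : sMap (Horn i) (H M X)), Rep e.
Proof.
have [phi [psi [h1 h2]]] := subeq_iso (horn_closed i) (KL_closed n (hornL i)) (@horn_KL n i).
have [M [e Re]] := KL_Rep (hornL i).
exists M, (scomp e phi); apply: (iso_Rep h1 h2); exact: Re.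
Qed.
End KLRep.
Lemma sMapE (A B : sSet) (F G : sMap A B) : F = G -> forall n x, F n x = G n x.
Proof. by move=> ->. Qed.
Arguments sMapE {A B F G} _ n x.

Lemma yon_ext (C : Cat) (Z : sObj C) n (U : C) (c : sMap (Delta n) (H U Z)) :
  c = post (c n (Did n)) (yonc Z n).
Proof.
apply: sMap_eq => m t /=; rewrite /yon.
by have := snat c t (Did n); rewrite /= Dcomp_id_l => ->.
Qed.

Unset Implicit Arguments.
Section Core.
Variables (C : Cat) (Pr : forall a b : C, hom a b -> Prop).
Hypothesis PrIso : forall (a b : C) (g : hom a b), iso g -> Pr a b g.
Hypothesis PrComp : forall (a b c : C) (g : hom a b) (h : hom b c),
  Pr a b g -> Pr b c h -> Pr a c (comp h g).
Hypothesis PrPB : forall (a b c : C) (f : hom a c) (g : hom b c) P p1 p2,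
  IsPullback f g P p1 p2 -> Pr b c g -> Pr P a p1.
Variables (t0 : C).
Hypothesis Ht : IsTerminal t0.
Hypothesis HP : forall (a b c : C) (f : hom a c) (g : hom b c),
      exists (P : C) (p1 : hom P a) (p2 : hom P b), IsPullback f g P p1 p2.
Variables (X Y : sObj C) (f : sHom X Y) (T : sSet).

Definition GRep (P : forall n, T n -> bool) (cl : sclosed P) (Q : C)
  (c : sMap (sub cl) (H Q X)) (d : sMap T (H Q Y)) : Prop :=
  postf f c = scomp d (incl cl) /\
  (forall U (c' : sMap (sub cl) (H U X)) (d' : sMap T (H U Y)),
     postf f c' = scomp d' (incl cl) -> exists u, post u c = c' /\ post u d = d') /\
  (forall U (u v : hom U Q), post u c = post v c -> post u d = post v d -> u = v).

Section Step.
Variables (n : nat) (i : 'I_n.+1) (P0 P1 : forall n, T n -> bool).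
Variables (cl0 : sclosed P0) (cl1 : sclosed P1) (hsub : forall n x, P0 n x -> P1 n x).
Variables (alpha : sMap (Horn i) (sub cl0)) (beta : sMap (Delta n) (sub cl1)).
Hypothesis PO : IsPushout (incl (horn_closed i)) alpha beta (subincl cl0 cl1 hsub).
Hypothesis hrel : rel_comparison Pr (horn_closed i) f (@yon C X n).

Lemma beta_act m (t : Dmor m n) : sval (beta m t) = act T t (sval (beta n (Did n))).
Proof. by have := snat beta t (Did n); rewrite /= Dcomp_id_l => ->. Qed.

Lemma alpha_beta m (x : Horn i m) : sval (alpha m x) = sval (beta m (sval x)).
Proof. by case: PO => e _; rewrite (e m x). Qed.

Lemma step Q0 c0 d0 : GRep P0 cl0 Q0 c0 d0 ->
  exists Q1 c1 d1, GRep P1 cl1 Q1 c1 d1 /\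
    exists p : hom Q1 Q0, Pr Q1 Q0 p /\ post p c0 = scomp c1 (subincl cl0 cl1 hsub) /\ post p d0 = d1.
Proof.
move=> [G0c [G0e G0u]].
have [MLX [eLX RLX]] := @Horn_Rep C X t0 Ht HP n i.
have [MLY [eLY RLY]] := @Horn_Rep C Y t0 Ht HP n i.
have [fS EfS] := RLY.1 MLX (postf f eLX).
have [rY ErY] := RLY.1 (Y n) (scomp (yonc Y n) (incl (horn_closed i))).
have [R [r1 [r2 PBR]]] := HP _ _ _ fS rY.
have [rX ErX] := RLX.1 (X n) (scomp (yonc X n) (incl (horn_closed i))).
have Eq1 : comp fS rX = comp rY (f n).
  apply: RLY.2; rewrite -!post_comp EfS ErY -postf_post ErX.
  by apply: sMap_eq => m x /=; rewrite /yon hnat.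
have [q [[q1 q2] _]] := PBR.2 (X n) rX (f n) Eq1.
have Prq : Pr (X n) R q.
  apply: (hrel _ _ _ _ _ _ (Rep_IsMap RLX) (Rep_IsMap RLY) (Rep_IsMap (yon_Rep Y n))
     fS rY _ _ R r1 r2 PBR rX (f n) _ _ q q1 q2).
  - by move=> m s; have := sMapE EfS m s.
  - by move=> m s; have := sMapE ErY m s.
  - by move=> m s; have := sMapE ErX m s.
  - by move=> m t /=; rewrite /yon hnat.
have [w1 Ew1] := RLX.1 Q0 (scomp c0 alpha).
have Eq2 : comp fS w1 = comp rY (d0 n (sval (beta n (Did n)))).
  apply: RLY.2; rewrite -!post_comp EfS ErY -postf_post Ew1.
  apply: sMap_eq => m x /=.
  have e1 := sMapE G0c m (alpha m x); simpl in e1; rewrite e1.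
  by rewrite alpha_beta beta_act (snat d0) /=.
have [g [[g1 g2] _]] := PBR.2 Q0 w1 (d0 n (sval (beta n (Did n)))) Eq2.
have [Q1 [p [h PB2]]] := HP _ _ _ g q.
have Prp : Pr Q1 Q0 p := PrPB _ _ _ _ _ _ _ _ PB2 Prq.
have agree : forall m x, post h (yonc X n) m (incl (horn_closed i) m x) = post p c0 m (alpha m x).
  move=> m x /=.
  have e1 := sMapE Ew1 m x; simpl in e1; rewrite -e1.
  have e2 := sMapE ErX m x; simpl in e2; rewrite -e2.
  by rewrite -!compA -g1 -(compA r1 g p) (proj1 PB2) (compA r1 q h) q1.
have [c1 [Ec1b Ec1j]] := pushout_glue PO agree.
have eh : h = c1 n (beta n (Did n)).
  by have := sMapE Ec1b n (Did n); rewrite /= /yon sact_id comp1l => ->.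
exists Q1, c1, (post p d0); split; last by exists p; split => //; split.
split; last split.
- apply: (pushout_uniq PO) => m x /=.
  + have e1 := sMapE Ec1b m x; simpl in e1; rewrite e1 /yon.
    rewrite beta_act (snat d0) /= -compA -g2 -(compA r2 g p) (proj1 PB2) (compA r2 q h) q2.
    by rewrite !compA hnat.
  + have e1 := sMapE Ec1j m x; simpl in e1; rewrite e1.
    have e2 := sMapE G0c m x; simpl in e2; by rewrite compA e2.
- move=> U c' d' Ec'.
  have Ec'0 : postf f (scomp c' (subincl cl0 cl1 hsub)) = scomp d' (incl cl0).
    by apply: sMap_eq => m x /=; have := sMapE Ec' m (subincl cl0 cl1 hsub m x).
  have [u1 [Eu1c Eu1d]] := G0e U _ d' Ec'0.
  have E3 : comp g u1 = comp q (c' n (beta n (Did n))).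
    apply: (pb_uniq PBR).
    + rewrite !compA g1 q1; apply: RLX.2; rewrite -!post_comp Ew1 ErX.
      apply: sMap_eq => m x /=.
      have e1 := sMapE Eu1c m (alpha m x); simpl in e1; rewrite e1 /yon.
      have := snat c' (sval x) (beta n (Did n)); rewrite /= => <-.
      by congr (c' m _); apply: sig_eqb; rewrite /= alpha_beta beta_act.
    + rewrite !compA g2 q2.
      have e1 := sMapE Eu1d n (sval (beta n (Did n))); simpl in e1; rewrite e1.
      by have := sMapE Ec' n (beta n (Did n)).
  have [v [[v1 v2] _]] := (proj2 PB2) U u1 _ E3.
  exists v; split.
  + apply: (pushout_uniq PO) => m x /=.
    * have e1 := sMapE Ec1b m x; simpl in e1; rewrite e1 /yon -compA v2.
      have := snat c' x (beta n (Did n)); rewrite /= => <-.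
      by f_equal; apply: sig_eqb; rewrite /= (beta_act m x).
    * have e1 := sMapE Ec1j m x; simpl in e1; rewrite e1 -compA v1.
      by have := sMapE Eu1c m x.
  + by rewrite post_comp v1.
- move=> U u v Ec Ed; apply: (pb_uniq PB2).
  + apply: G0u; last by rewrite -!post_comp.
    by rewrite -!post_comp -Ec1j !post_scomp Ec.
  + by rewrite eh; have := sMapE Ec n (beta n (Did n)).
Qed.
End Step.
Lemma GRep_iso P (cl : sclosed P) Q c d Q' c' d' : GRep P cl Q c d -> GRep P cl Q' c' d' ->
  exists th : hom Q Q', iso th /\ post th c' = c /\ post th d' = d.
Proof.
move=> [Gc [Ge Gu]] [Gc' [Ge' Gu']].
have [th [E1 E2]] := Ge' Q c d Gc.
have [th' [E1' E2']] := Ge Q' c' d' Gc'.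
exists th; split => //; exists th'; split.
- by apply: Gu; rewrite -post_comp ?E1' ?E1 ?E2' ?E2 post_id.
- by apply: Gu'; rewrite -post_comp ?E1' ?E1 ?E2' ?E2 post_id.
Qed.

Lemma Fmono (F : nat -> forall n, T n -> bool) (Fsub : forall l n x, F l n x -> F l.+1 n x)
  l n x : F 0 n x -> F l n x.
Proof. by move=> h; elim: l => [//|l IH]; exact: Fsub _ _ _ IH. Qed.

Theorem core_thm (S : forall n, T n -> bool) (clS : sclosed S) (L : nat)
  (F : nat -> forall n, T n -> bool) (Fcl : forall l, sclosed (F l))
  (Fsub : forall l n x, F l n x -> F l.+1 n x) (ns : nat -> nat) (ix : forall l, 'I_(ns l).+1)
  (h0 : forall n x, F 0 n x = S n x) (hL : forall n x, F L n x)
  (hpo : forall l, (l < L)%N -> exists alpha beta,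
       IsPushout (incl (horn_closed (ix l))) alpha beta (subincl (Fcl l) (Fcl l.+1) (Fsub l)))
  (hrel : forall l, (l < L)%N -> rel_comparison Pr (horn_closed (ix l)) f (@yon C X (ns l)))
  (MTX : C) (eTX : forall n, T n -> hom MTX (X n)) :
  IsMap T X MTX eTX -> rel_comparison Pr clS f eTX.
Proof.
move=> HTX MSX eSX MSY eSY MTY eTY HSX HSY HTY fS rY EfS ErY P p1 p2 PB rX fT ErX EfT q q1 q2.
have RSX := IsMap_Rep (proj1 HSX) HSX.
have RSY := IsMap_Rep (proj1 HSY) HSY.
have RTY := IsMap_Rep (proj1 HTY) HTY.
have RTX := IsMap_Rep (proj1 HTX) HTX.
set sSX := mkc (proj1 HSX) in RSX.
set sSY := mkc (proj1 HSY) in RSY.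
set sTY := mkc (proj1 HTY) in RTY.
set sTX := mkc (proj1 HTX) in RTX.
have hth : forall n x, F 0 n x -> S n x by move=> n x; rewrite h0.
have hthi : forall n x, S n x -> F 0 n x by move=> n x; rewrite h0.
set th := subincl (Fcl 0) clS hth.
set thi := subincl clS (Fcl 0) hthi.
have ththi : forall n x, th n (thi n x) = x by move=> n x; apply: sig_eqb.
have thith : forall n x, thi n (th n x) = x by move=> n x; apply: sig_eqb.
set c0 := post p1 (scomp sSX th).
set d0 := post p2 sTY.
have G0 : GRep (F 0) (Fcl 0) P c0 d0.
  split; last split.
  - apply: sMap_eq => m x /=.
    by rewrite compA -EfS -compA (proj1 PB) compA ErY.
  - move=> U c' d' Ec'.
    have [u1 Eu1] := RSX.1 U (scomp c' thi).
    have [u2 Eu2] := RTY.1 U d'.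
    have E : comp fS u1 = comp rY u2.
      apply: RSY.2; apply: sMap_eq => m s /=.
      rewrite compA EfS compA ErY -compA.
      have e1 := sMapE Eu1 m s; simpl in e1; rewrite e1.
      have e2 := sMapE Eu2 m (sval s); simpl in e2; rewrite e2.
      by have := sMapE Ec' m (thi m s).
    have [v [[v1 v2] _]] := (proj2 PB) U u1 u2 E.
    exists v; split.
    + apply: sMap_eq => m x /=; rewrite -compA v1.
      have e1 := sMapE Eu1 m (th m x); simpl in e1; rewrite e1.
      by congr (c' m _); apply: sig_eqb.
    + by rewrite /d0 post_comp v2.
  - move=> U u v Ec Ed; apply: (pb_uniq PB).
    + apply: RSX.2; apply: sMap_eq => m s /=.
      have := sMapE Ec m (thi m s).
      change (comp (comp (eSX m (th m (thi m s))) p1) u = comp (comp (eSX m (th m (thi m s))) p1) v -> comp (eSX m s) (comp p1 u) = comp (eSX m s) (comp p1 v)).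
      by rewrite ththi -!compA.
    + by apply: RTY.2; rewrite -!post_comp.
have chain : forall l, (l <= L)%N -> exists Q c d, GRep (F l) (Fcl l) Q c d /\
    exists gam : hom Q P, Pr Q P gam /\
      (forall n (x : sub (Fcl 0) n) (y : sub (Fcl l) n), sval x = sval y ->
         comp (c0 n x) gam = c n y) /\ post gam d0 = d.
  elim => [_|l IH hl].
  - exists P, c0, d0; split => //; exists (idm P); split; first exact: PrIso _ _ _ (iso_id _).
    split; last exact: post_id.
    by move=> n x y e; rewrite comp1r; congr (c0 n _); apply: sig_eqb.
  - have [Q [c [d [G [gam [Prg [Ec Ed]]]]]]] := IH (ltnW hl).
    have [alpha [beta PO]] := hpo l hl.
    have [Q1 [c1 [d1 [G1 [p [Prp [Ep Epd]]]]]]] :=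
      step (ns l) (ix l) (F l) (F l.+1) (Fcl l) (Fcl l.+1) (Fsub l) alpha beta PO (hrel l hl) Q c d G.
    exists Q1, c1, d1; split => //; exists (comp gam p); split; first exact: PrComp _ _ _ _ _ Prp Prg.
    split; last by rewrite -post_comp Ed.
    move=> n x y e.
    pose y' := exist (fun z => F l n z) (sval x) (Fmono F Fsub l n (sval x) (svalP x)).
    rewrite compA (Ec n x y' erefl).
    have := sMapE Ep n y'; rewrite /= => ->; congr (c1 n _); exact: sig_eqb.
have [QL [cL [dL [GL [gam [Prg [Ec Ed]]]]]]] := chain L (leqnn L).
have GT : GRep (F L) (Fcl L) MTX (scomp sTX (incl (Fcl L))) (postf f sTX).
  split; last split.
  - by apply: sMap_eq.
  - move=> U c' d' Ec'.
    have kanat : forall m n (a : Dmor m n) (t : T n), exist (fun z => F L m z) (act T a t) (hL m (act T a t))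
        = act (sub (Fcl L)) a (exist (fun z => F L n z) t (hL n t)) by move=> *; apply: sig_eqb.
    pose ka : sMap T (sub (Fcl L)) := @Build_sMap T (sub (Fcl L))
      (fun n t => exist (fun z => F L n z) t (hL n t)) kanat.
    have [u Eu] := RTX.1 U (scomp c' ka).
    exists u; split.
    + rewrite post_scomp Eu; apply: sMap_eq => m x /=; congr (c' m _); exact: sig_eqb.
    + rewrite -postf_post Eu; apply: sMap_eq => m t /=.
      by have := sMapE Ec' m (ka m t).
  - move=> U u v Ec' _; apply: RTX.2; apply: sMap_eq => m t.
    by have := sMapE Ec' m (exist (fun z => F L m z) t (hL m t)).
have [th' [Ith [E1 E2]]] := GRep_iso (F L) (Fcl L) _ _ _ _ _ _ GT GL.
have -> : q = comp gam th'.
  apply: (pb_uniq PB).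
  - rewrite q1; apply: RSX.2; apply: sMap_eq => m s /=.
    rewrite ErX !compA.
    have e1 : comp (eSX m s) p1 = c0 m (thi m s).
      by change (comp (eSX m s) p1 = comp (eSX m (th m (thi m s))) p1); rewrite ththi.
    rewrite e1 (Ec m (thi m s) (exist (fun z => F L m z) (sval s) (hL m (sval s)))) //.
    by have := sMapE E1 m (exist (fun z => F L m z) (sval s) (hL m (sval s))).
  - rewrite q2; apply: RTY.2; rewrite -!post_comp Ed E2.
    by apply: sMap_eq => m t /=; rewrite EfT.
exact: PrComp _ _ _ _ _ (PrIso _ _ _ Ith) Prg.
Qed.
End Core.
Set Implicit Arguments.
From Stdlib Require Import IndefiniteDescription.

Section Final.
Variable C : Cat.

Lemma iso_cancel_l (a b c : C) (f : hom a b) (g : hom b c) : iso g -> iso (comp g f) -> iso f.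
Proof.
move=> [g' [h1 h2]] Hgf.
have -> : f = comp g' (comp g f) by rewrite compA h1 comp1l.
apply: iso_comp => //; exact: iso_inv h1 h2.
Qed.

Lemma iso_cancel_r (a b c : C) (f : hom a b) (g : hom b c) : iso f -> iso (comp g f) -> iso g.
Proof.
move=> [f' [h1 h2]] Hgf.
have -> : g = comp (comp g f) f' by rewrite -compA h2 comp1r.
apply: iso_comp => //; exact: iso_inv h1 h2.
Qed.

Lemma Rep_iso (K : sSet) (X : sObj C) M (e : sMap K (H M X)) M' (e' : sMap K (H M' X)) :
  Rep e -> Rep e' -> forall th : hom M M', post th e' = e -> iso th.
Proof.
move=> R R' th E; have [th' E'] := R.1 M' e'.
exists th'; split.
- by apply: R.2; rewrite -post_comp E' E post_id.
- by apply: R'.2; rewrite -post_comp E E' post_id.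
Qed.

Lemma terminal_iso (a b : C) (f : hom a b) : IsTerminal a -> IsTerminal b -> iso f.
Proof.
move=> Ha Hb; have [g _] := Ha b; exists g; split.
- by have [u Hu] := Ha a; rewrite (Hu (comp g f)) (Hu (idm a)).
- by have [u Hu] := Hb b; rewrite (Hu (comp f g)) (Hu (idm b)).
Qed.

Lemma rel_iso_from (X Y : sObj C) (f : sHom X Y) n (i : 'I_n.+1) :
  abs_comparison (@iso C) (horn_closed i) (@yon C X n) ->
  abs_comparison (@iso C) (horn_closed i) (@yon C Y n) ->
  rel_comparison (@iso C) (horn_closed i) f (@yon C X n).
Proof.
move=> hX hY MSX eSX MSY eSY MTY eTY HSX HSY HTY fS rY EfS ErY P p1 p2 PB rX fT ErX EfT q q1 q2.
have IrX : iso rX := hX MSX eSX HSX rX ErX.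
have RTY := IsMap_Rep (proj1 HTY) HTY.
have [psi Epsi] := RTY.1 (Y n) (yonc Y n).
have Ipsi : iso psi := Rep_iso (yon_Rep Y n) RTY Epsi.
have IrY : iso (comp rY psi).
  apply: (hY MSY eSY HSY) => m s; rewrite compA ErY.
  by have := sMapE Epsi m (sval s).
have IrY' : iso rY := iso_cancel_r Ipsi IrY.
have Ip1 : iso p1 := iso_pullback PB IrY'.
by apply: (iso_cancel_l Ip1); rewrite q1.
Qed.

Variables (t : C) (Ht : IsTerminal t).

Definition bang (a : C) : hom a t := proj1_sig (constructive_indefinite_description _ (Ht a)).
Lemma bang_uniq (a : C) (u v : hom a t) : u = v.
Proof. by have [w Hw] := Ht a; rewrite (Hw u) (Hw v). Qed.

Definition termS : sObj C.
refine (@Build_sObj C (fun _ => t) (fun _ _ _ => idm t) _ _).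
- by [].
- by move=> *; rewrite comp1l.
Defined.

Definition bangS (X : sObj C) : sHom X termS.
refine (@Build_sHom C X termS (fun n => bang (X n)) _).
by move=> *; apply: bang_uniq.
Defined.

Lemma Map_termS (K : sSet) M (e : forall n, K n -> hom M t) : IsMap K termS M e -> IsTerminal M.
Proof.
move=> [_ U] a.
have cn : cone (X := termS) (fun n (x : K n) => bang a) by move=> *; apply: bang_uniq.
have [u [_ Hu]] := U a _ cn.
exists u => v; apply: Hu => n x; exact: bang_uniq.
Qed.

Lemma abs_to_rel (Pr : forall a b : C, hom a b -> Prop)
  (PrIso : forall (a b : C) (g : hom a b), iso g -> Pr a b g)
  (PrComp : forall (a b c : C) (g : hom a b) (h : hom b c), Pr a b g -> Pr b c h -> Pr a c (comp h g))
  (T : sSet) (S : forall n, T n -> bool) (clS : sclosed S) (X : sObj C) A (eA : forall n, T n -> hom A (X n)) :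
  abs_comparison Pr clS eA -> rel_comparison Pr clS (bangS X) eA.
Proof.
move=> hX MSX eSX MSY eSY MTY eTY HSX HSY HTY fS rY EfS ErY P p1 p2 PB rX fT ErX EfT q q1 q2.
have PrX := hX MSX eSX HSX rX ErX.
have IrY : iso rY := terminal_iso rY (Map_termS HTY) (Map_termS HSY).
have [p1' [h1 h2]] := iso_pullback PB IrY.
have -> : q = comp p1' rX by rewrite -q1 compA h1 comp1l.
exact: PrComp _ _ _ _ _ PrX (PrIso _ _ _ (iso_inv h1 h2)).
Qed.

Lemma rel_to_abs (Pr : forall a b : C, hom a b -> Prop)
  (T : sSet) (S : forall n, T n -> bool) (clS : sclosed S) (X : sObj C) A (eA : forall n, T n -> hom A (X n)) :
  rel_comparison Pr clS (bangS X) eA -> abs_comparison Pr clS eA.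
Proof.
move=> hr MS eS HS r Er.
have HtS : forall (K : sSet), IsMap K termS t (fun n (x : K n) => idm t).
  move=> K; split; first by move=> *; rewrite comp1l.
  move=> U phi _; exists (bang U); split; first by move=> *; apply: bang_uniq.
  by move=> *; apply: bang_uniq.
have PB : IsPullback (bang MS) (idm t) MS (idm MS) (bang MS).
  split; first exact: bang_uniq.
  move=> Q q1 q2 _; exists q1; split; first by split; [rewrite comp1l | apply: bang_uniq].
  by move=> u' e _; rewrite -e comp1l.
apply: (hr MS eS t _ t _ HS (HtS _) (HtS _) (bang MS) (idm t) _ _ MS (idm MS) (bang MS) PB r (bang A) Er _ r)
  => //; try by move=> *; apply: bang_uniq.
by rewrite comp1l.
Qed.
End Final.
Unset Implicit Arguments.

Theorem lemma3p9 (C : Cat) (V : Descent C) (k : nat) (T : sSet)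
  (S : forall n, T n -> bool) (clS : sclosed S) (m : nat) :
  finite_sSet T -> expansion T S m ->
  (* (i) *)
  (forall X : sObj C, kgroupoid V k X ->
   forall (MT : C) (eT : forall n, T n -> hom MT (X n)), IsMap T X MT eT ->
     abs_comparison (iscover V) clS eT /\
     ((k < m)%N -> abs_comparison (@iso C) clS eT)) /\
  (* (ii) *)
  (forall (X Y : sObj C) (f : sHom X Y),
     kgroupoid V k X -> kgroupoid V k Y -> fibration V f ->
   forall (MTX : C) (eTX : forall n, T n -> hom MTX (X n)), IsMap T X MTX eTX ->
     rel_comparison (iscover V) clS f eTX /\
     ((k < m)%N -> rel_comparison (@iso C) clS f eTX)).
Proof.
move=> _ [hm [L [F [Fcl [Fsub [ns [ix [h0 [hL [hns [_ hpo]]]]]]]]]]].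
have [t Ht] := has_terminal V.
have HP := has_pullbacks V.
have cPrIso : forall (a b : C) (g : hom a b), iso g -> iscover V g.
  by move=> a b g h; apply: iso_cover.
have cPrComp : forall (a b c : C) (g : hom a b) (h : hom b c),
    iscover V g -> iscover V h -> iscover V (comp h g).
  by move=> a b c g h Hg Hh; apply: cover_comp.
have cPrPB : forall (a b c : C) (f : hom a c) (g : hom b c) P p1 p2,
    IsPullback f g P p1 p2 -> iscover V g -> iscover V p1.
  by move=> a b c f g P p1 p2 H1 H2; apply: cover_pullback H1 H2.
have iPrIso : forall (a b : C) (g : hom a b), iso g -> iso g by [].
have iPrComp : forall (a b c : C) (g : hom a b) (h : hom b c), iso g -> iso h -> iso (comp h g).
  by move=> *; apply: iso_comp.
have iPrPB : forall (a b c : C) (f : hom a c) (g : hom b c) P p1 p2,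
    IsPullback f g P p1 p2 -> iso g -> iso p1.
  by move=> *; apply: iso_pullback; eassumption.
have npos : forall l, (l < L)%N -> (0 < ns l)%N.
  by move=> l hl; apply: leq_trans hm (hns l hl).
split.
- move=> X hX MT eT HT; split.
  + have hr : forall l, (l < L)%N -> rel_comparison (iscover V) (horn_closed (ix l)) (bangS Ht X) (@yon C X (ns l)).
      move=> l hl; apply: abs_to_rel => //.
      exact: (proj1 (hX (ns l) (ix l) (npos l hl))).
    exact: (rel_to_abs (core_thm C (iscover V) cPrIso cPrComp cPrPB t Ht HP X (termS t) (bangS Ht X) T S clS
             L F Fcl Fsub ns ix h0 hL hpo hr MT eT HT)).
  + move=> hk.
    have hr : forall l, (l < L)%N -> rel_comparison (@iso C) (horn_closed (ix l)) (bangS Ht X) (@yon C X (ns l)).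
      move=> l hl; apply: abs_to_rel => //.
      exact: (proj2 (hX (ns l) (ix l) (npos l hl)) (leq_trans hk (hns l hl))).
    exact: (rel_to_abs (core_thm C (@iso C) iPrIso iPrComp iPrPB t Ht HP X (termS t) (bangS Ht X) T S clS
             L F Fcl Fsub ns ix h0 hL hpo hr MT eT HT)).
- move=> X Y f hX hY hf MTX eTX HTX; split.
  + apply: (core_thm C (iscover V) cPrIso cPrComp cPrPB t Ht HP X Y f T S clS
             L F Fcl Fsub ns ix h0 hL hpo _ MTX eTX HTX).
    move=> l hl; exact: (hf (ns l) (ix l) (npos l hl)).
  + move=> hk.
    apply: (core_thm C (@iso C) iPrIso iPrComp iPrPB t Ht HP X Y f T S clS
             L F Fcl Fsub ns ix h0 hL hpo _ MTX eTX HTX).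
    move=> l hl; apply: rel_iso_from.
    * exact: (proj2 (hX (ns l) (ix l) (npos l hl)) (leq_trans hk (hns l hl))).
    * exact: (proj2 (hY (ns l) (ix l) (npos l hl)) (leq_trans hk (hns l hl))).
Qed.
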